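(* Let $n\ge 2$ and let $\alpha\in B_n\subset \mathrm{Aut}(F_n)$. Let $B_\alpha\in GL(n,\mathbb{Z}[t,t^{-1}])$ be the Burau matrix of $\alpha$, and for $t_0\in\mathbb{C}\setminus\{0\}$ let $B_\alpha(t_0)\in GL(n,\mathbb{C})$ be the matrix obtained by evaluating every entry at $t=t_0$. Then $$\mathrm{GR}(\alpha)\;\ge\;\sup\{R(B_\alpha(t_0)) : t_0\in\mathbb{C},\ |t_0|=1\},$$ where $R(M)$ denotes the spectral radius of a complex matrix $M$.
   Context: $F_n=\langle x_1,\dots,x_n\rangle$ is the free group on $x_1,\dots,x_n$. Automorphisms act on the right: $(g)\alpha$ denotes the image of $g$, and $(g)(\alpha\beta)=((g)\alpha)\beta$. The braid group $B_n$ is the subgroup of $\mathrm{Aut}(F_n)$ of automorphisms $\alpha$ such that there is a permutation $\mu$ of $\{1,\dots,n\}$ and elements $A_i\in F_n$ with $(x_i)\alpha=A_ix_{\mu(i)}A_i^{-1}$ for all $i$, and $(x_1x_2\cdots x_n)\alpha=x_1x_2\cdots x_n$. It is generated by $\sigma_1,\dots,\sigma_{n-1}$, where $(x_i)\sigma_i=x_ix_{i+1}x_i^{-1}$, $(x_{i+1})\sigma_i=x_i$, $(x_j)\sigma_i=x_j$ for $j\ne i,i+1$. Fox free derivatives: for $j=1,\dots,n$, $\partial/\partial x_j:\mathbb{Z}F_n\to\mathbb{Z}F_n$ is the unique additive map with $\partial(g_1g_2)/\partial x_j=\partial g_1/\partial x_j+g_1\,\partial g_2/\partial x_j$ for $g_1,g_2\in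 F_n$ and $\partial x_i/\partial x_j=\delta_{ij}$. Let $\varphi:\mathbb{Z}F_n\to\mathbb{Z}[t,t^{-1}]$ be the ring homomorphism induced by $x_i\mapsto t$ for all $i$. The Burau matrix of $\alpha\in B_n$ is $B_\alpha=(b_{ij})_{1\le i,j\le n}$ with $b_{ij}=\varphi\big(\partial((x_i)\alpha)/\partial x_j\big)$; one has $B_{\alpha\beta}=B_\alpha B_\beta$. Growth rate: for $g\in F_n$ let $L(g)$ be the length of the reduced word representing $g$ in the letters $x_i^{\pm1}$. For an automorphism $\alpha$ of $F_n$, $\mathrm{GR}(\alpha)=\sup_{g\in F_n}\limsup_{p\to\infty}L((g)\alpha^p)^{1/p}$. *)

(* Defs.v *)
From HB Require Import structures.
From mathcomp Require Import all_boot all_order all_algebra all_fingroup.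
From mathcomp Require Import all_classical all_reals all_analysis.
From mathcomp Require Import complex.
Set Implicit Arguments. Unset Strict Implicit. Unset Printing Implicit Defensive.
Import Order.TTheory GRing.Theory Num.Theory.
Local Open Scope ring_scope.

(* a letter (i, true) is x_i, (i, false) is x_i^{-1}; a word is a seq of letters *)
Definition letter (n : nat) := ('I_n * bool)%type.
Definition word (n : nat) := seq (letter n).

Definition linv {n} (a : letter n) : letter n := (a.1, ~~ a.2).
Definition winv {n} (w : word n) : word n := rev (map linv w).

Definition push {n} (a : letter n) (s : word n) : word n :=
  if s is b :: s' then (if b == linv a then s' else a :: s) else [:: a].
Definition reduce {n} (w : word n) : word n := foldr push [::] w.

Definition wlen {n} (w : word n) : nat := size (reduce w).

(* An endomorphism of F_n is given by the images f i of the generators x_i;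
   [apply f g] is (g)f, computed as a reduced word. *)
Definition apply {n} (f : 'I_n -> word n) (w : word n) : word n :=
  reduce (flatten (map (fun a : letter n => if a.2 then f a.1 else winv (f a.1)) w)).

Definition gen {n} (i : 'I_n) : word n := [:: (i, true)].

Definition is_aut {n} (f : 'I_n -> word n) : Prop :=
  exists h : 'I_n -> word n,
    forall i, apply h (f i) = gen i /\ apply f (h i) = gen i.

Definition apply_pow {n} (f : 'I_n -> word n) (p : nat) (w : word n) : word n :=
  iter p (apply f) (reduce w).

Definition prod_gens (n : nat) : word n := [seq (i, true) | i <- enum 'I_n].

Definition is_braid {n} (f : 'I_n -> word n) : Prop :=
  is_aut f /\
  (exists (mu : 'S_n) (A : 'I_n -> word n),
     forall i, reduce (f i) = reduce (A i ++ gen (mu i) ++ winv (A i))) /\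
  apply f (prod_gens n) = reduce (prod_gens n).

(* an element of Z F_n as a formal Z-linear combination of words *)
Definition zfn (n : nat) := seq (int * word n).

Definition lmul {n} (g : word n) (s : zfn n) : zfn n :=
  [seq (c.1, g ++ c.2) | c <- s].

(* d w / d x_j, via the product rule d(a w) = d a + a (d w),
   with d x_i/d x_j = delta_ij, d x_i^{-1}/d x_j = - delta_ij x_i^{-1} *)
Fixpoint fox {n} (j : 'I_n) (w : word n) : zfn n :=
  match w with
  | [::] => [::]
  | a :: w' =>
      (if a.1 == j then (if a.2 then [:: (1%Z, [::])] else [:: ((-1)%Z, [:: a])])
       else [::]) ++ lmul [:: a] (fox j w')
  end.

(* exponent sum: phi(g) = t^(expsum g) *)
Definition expsum {n} (w : word n) : int :=
  \sum_(a <- w) (if a.2 then 1%Z else (-1)%Z).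

(* phi : Z F_n -> Z[t,t^-1] followed by evaluation at t = t0 *)
Definition phi_eval {n} {F : unitRingType} (t0 : F) (s : zfn n) : F :=
  \sum_(c <- s) (c.1)%:~R * t0 ^ (expsum c.2).

Definition burau_eval {n} {F : unitRingType} (f : 'I_n -> word n) (t0 : F) : 'M[F]_n :=
  \matrix_(i < n, j < n) phi_eval t0 (fox j (reduce (f i))).

Definition growth_rate {R : realType} {n} (f : 'I_n -> word n) : \bar R :=
  ereal_sup [set limn_esup (fun p : nat =>
                 (((wlen (apply_pow f p g))%:R : R) `^ (p%:R^-1))%:E)
            | g in [set: word n]].

Definition spectral_radius {R : realType} {n} (M : 'M[R[i]]_n) : \bar R :=
  ereal_sup [set (Normc.normc lam)%:E | lam in [set lam | eigenvalue M lam]].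

(* Main.v *)
Require Import Defs.
From HB Require Import structures.
From mathcomp Require Import all_boot all_order all_algebra all_fingroup.
From mathcomp Require Import all_classical all_reals all_analysis.
From mathcomp Require Import complex.
From mathcomp Require Import ring.
From Stdlib Require Classical_Prop.
Set Implicit Arguments. Unset Strict Implicit. Unset Printing Implicit Defensive.
Import Order.TTheory GRing.Theory Num.Theory.
Local Open Scope ring_scope.

Section Fox.
Variables (F : fieldType) (n : nat) (t : F).
Hypothesis ht : t != 0.

Definition el (a : letter n) : int := if a.2 then 1%Z else (-1)%Z.
Definition cl (a : letter n) : F := if a.2 then 1 else - t ^ (-1).
Definition d (j : 'I_n) (w : word n) : F := phi_eval t (fox j w).

Lemma phi_eval_cat (s1 s2 : zfn n) :
  phi_eval t (s1 ++ s2) = phi_eval t s1 + phi_eval t s2.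
Proof. by rewrite /phi_eval big_cat. Qed.

Lemma expsum_cat (u v : word n) : expsum (u ++ v) = (expsum u + expsum v)%R.
Proof. by rewrite /expsum big_cat. Qed.

Lemma expsum_cons (a : letter n) u : expsum (a :: u) = (el a + expsum u)%R.
Proof. by rewrite /expsum big_cons. Qed.

Lemma expsum_nil : expsum ([::] : word n) = 0%R.
Proof. by rewrite /expsum big_nil. Qed.

Lemma phi_eval_lmul g (s : zfn n) :
  phi_eval t (lmul g s) = t ^ (expsum g) * phi_eval t s.
Proof.
rewrite /phi_eval /lmul big_map mulr_sumr; apply: eq_bigr => c _ /=.
by rewrite expsum_cat expfzDr // mulrCA.
Qed.

Lemma phi_eval_nil : phi_eval t ([::] : zfn n) = 0.
Proof. by rewrite /phi_eval big_nil. Qed.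

Lemma d_nil j : d j [::] = 0.
Proof. by rewrite /d /= phi_eval_nil. Qed.

Lemma d_single j (a : letter n) : d j [:: a] = (a.1 == j)%:R * cl a.
Proof.
rewrite /d /= phi_eval_cat phi_eval_nil addr0 /phi_eval.
case: (a.1 == j); last by rewrite big_nil mul0r.
rewrite mul1r /cl; case: a => k [] /=; rewrite big_seq1 /=.
  by rewrite expsum_nil expr0z mulr1.
by rewrite expsum_cons expsum_nil addr0 /el /= mulN1r.
Qed.

Lemma d_cons j (a : letter n) w : d j (a :: w) = d j [:: a] + t ^ (el a) * d j w.
Proof.
rewrite {1}/d /= phi_eval_cat phi_eval_lmul expsum_cons expsum_nil addr0.
by congr (_ + _); rewrite /d /= phi_eval_cat phi_eval_nil addr0.
Qed.

Lemma d_cat j (u v : word n) : d j (u ++ v) = d j u + t ^ (expsum u) * d j v.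
Proof.
elim: u => [|a u IH] /=; first by rewrite d_nil expsum_nil expr0z mul1r add0r.
rewrite d_cons IH (d_cons j a u) expsum_cons expfzDr // mulrDr addrA mulrA.
by [].
Qed.


Lemma el_linv a : el (linv a) = (- el a)%R.
Proof. by case: a => k []. Qed.

Lemma d_linv j a : d j [:: linv a] = - t ^ (- el a) * d j [:: a].
Proof.
rewrite !d_single /linv /cl /el; case: a => k [] /=.
  by ring.
rewrite (_ : (- (-1))%Z = 1) // expr1z exprN1.
by rewrite mulrN mulrNN mulrCA mulfV // !mulr1.
Qed.

Lemma expsum_single a : expsum [:: a] = el a.
Proof. by rewrite expsum_cons expsum_nil addr0. Qed.

Lemma push_spec a (s : word n) :
  expsum (push a s) = expsum (a :: s) /\ forall j, d j (push a s) = d j (a :: s).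
Proof.
case: s => [|b s] //=.
case: eqP => [->|_] //.
rewrite !expsum_cons el_linv addrA subrr add0r; split => // j.
rewrite d_cons (d_cons j (linv a)) d_linv el_linv mulrDr addrA mulrA -expfzDr //.
rewrite subrr expr0z mul1r mulrA mulrN mulNr -expfzDr // subrr expr0z mul1r.
by rewrite subrr add0r.
Qed.

Lemma reduce_spec (w : word n) :
  expsum (reduce w) = expsum w /\ forall j, d j (reduce w) = d j w.
Proof.
elim: w => [|a w [IH1 IH2]] //=.
have [P1 P2] := push_spec a (reduce w).
rewrite P1 !expsum_cons IH1; split => // j.
by rewrite P2 (d_cons j a (reduce w)) (d_cons j a w) IH2.
Qed.

Lemma winv_cons a (w : word n) : winv (a :: w) = winv w ++ [:: linv a].
Proof. by rewrite /winv /= rev_cons cats1. Qed.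

Lemma expsum_winv (w : word n) : expsum (winv w) = (- expsum w)%R.
Proof.
elim: w => [|a w IH]; first by rewrite expsum_nil.
by rewrite winv_cons expsum_cat IH expsum_single el_linv expsum_cons opprD addrC.
Qed.

Lemma d_winv j (w : word n) : d j (winv w) = - t ^ (- expsum w) * d j w.
Proof.
elim: w => [|a w IH]; first by rewrite /winv /= d_nil mulr0.
rewrite winv_cons d_cat IH expsum_winv d_linv expsum_cons (d_cons j a w).
rewrite opprD expfzDr //.
set X := t ^ (- el a); set Y := t ^ (- expsum w); set Z := t ^ el a.
have XZ : X * Z = 1 by rewrite /X /Z -expfzDr // addrC subrr expr0z.
set A := d j [:: a]; set B := d j w.
have -> : - (X * Y) * (A + Z * B) = - (X * Y) * A - Y * (X * Z) * B by ring.
rewrite XZ mulr1; ring.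
Qed.

End Fox.

Section Chain.
Variables (F : fieldType) (n : nat) (t : F) (f : 'I_n -> word n).
Hypothesis ht : t != 0.
Hypothesis hf1 : forall k, expsum (f k) = 1%R.

Local Notation B := (burau_eval f t).
Definition img (a : letter n) : word n := if a.2 then f a.1 else winv (f a.1).

Lemma sum_delta (i : 'I_n) (x : 'I_n -> F) : \sum_k (i == k)%:R * x k = x i.
Proof.
rewrite (bigD1 i) //= eqxx mul1r big1 ?addr0 // => k /negbTE.
by rewrite eq_sym => ->; rewrite mul0r.
Qed.

Lemma img_spec a : expsum (img a) = el a /\ forall j, d t j (img a) = cl t a * B (a.1) j.
Proof.
have Bf k j : B k j = d t j (f k).
  by rewrite /burau_eval mxE; exact: (proj2 (reduce_spec ht (f k)) j).
rewrite /img /el /cl; case: a => k [] /=.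
  by split => // j; rewrite Bf mul1r.
rewrite expsum_winv hf1; split => // j.
by rewrite d_winv // hf1 Bf.
Qed.

Lemma flat_spec (w : word n) :
  expsum (flatten (map img w)) = expsum w /\
  forall j, d t j (flatten (map img w)) = \sum_k d t k w * B k j.
Proof.
elim: w => [|a w [IH1 IH2]].
  split => // j; rewrite /= d_nil big1 // => k _; by rewrite d_nil mul0r.
have [E1 E2] := img_spec a.
rewrite /= expsum_cat E1 IH1 expsum_cons; split => // j.
rewrite d_cat // E2 IH2 E1.
under eq_bigr => k _ do rewrite (d_cons ht k a w) d_single mulrDl -mulrA.
rewrite big_split /= (sum_delta (a.1) (fun i => cl t a * B i j)); congr (_ + _).
rewrite mulr_sumr; apply: eq_bigr => k _; by rewrite mulrA.
Qed.

Lemma apply_spec (w : word n) :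
  expsum (apply f w) = expsum w /\
  forall j, d t j (apply f w) = \sum_k d t k w * B k j.
Proof.
rewrite /apply; have [R1 R2] := reduce_spec ht (flatten (map img w)).
have [F1 F2] := flat_spec w.
rewrite /img in R1 R2 F1 F2.
by rewrite R1 F1; split => // j; rewrite R2 F2.
Qed.

Lemma eig_iter (v : 'rV[F]_n) lam : v *m B = lam *: v -> forall p j,
  \sum_i v 0 i * d t j (apply_pow f p (gen i)) = lam ^+ p * v 0 j.
Proof.
move=> hv; elim=> [|p IH] j.
  under eq_bigr => i _ do rewrite /apply_pow /= d_single /= mulr1 mulrC eq_sym.
  by rewrite sum_delta expr0 mul1r.
under eq_bigr => i _ do rewrite (_ : apply_pow f p.+1 (gen i) = apply f (apply_pow f p (gen i))) // (proj2 (apply_spec _)) mulr_sumr.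
rewrite exchange_big /=.
under eq_bigr => k _ do (under eq_bigr => i _ do rewrite mulrA; rewrite -mulr_suml IH -mulrA).
rewrite -mulr_sumr.
have := congr1 (fun M : 'rV_n => M 0 j) hv; rewrite /= !mxE => ->.
by rewrite exprSr mulrA.
Qed.

End Chain.

Section Norm.
Variable R : realType.
Local Notation nc := (@Normc.normc R).

Lemma nc_ge0 (x : R[i]) : 0 <= nc x.
Proof. by case: x => a b; exact: sqrtr_ge0. Qed.

Lemma nc_sum (I : Type) (r : seq I) (P : pred I) (F : I -> R[i]) :
  nc (\sum_(i <- r | P i) F i) <= \sum_(i <- r | P i) nc (F i).
Proof.
elim/big_ind2: _ => //.
  by rewrite Normc.normc0.
move=> x1 y1 x2 y2 h1 h2; apply: le_trans (le_normcD _ _) _; exact: lerD.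
Qed.

Lemma nc_X (x : R[i]) p : nc (x ^+ p) = nc x ^+ p.
Proof.
elim: p => [|p IH]; first by rewrite !expr0 Normc.normc1.
by rewrite !exprS Normc.normcM IH.
Qed.

Variable (n : nat) (t : R[i]).
Hypothesis ht1 : nc t = 1.

Lemma ht0 : t != 0.
Proof. by apply/eqP => t0; move: ht1; rewrite t0 Normc.normc0 => /esym/eqP; rewrite oner_eq0. Qed.

Lemma nc_tpow (a : letter n) : nc (t ^ el a) = 1.
Proof.
rewrite /el; case: a.2; first by rewrite expr1z.
by rewrite exprN1 Normc.normcV ht1 invr1.
Qed.

Lemma nc_single j (a : letter n) : nc (d t j [:: a]) <= 1.
Proof.
rewrite d_single; case: (a.1 == j); last by rewrite mul0r Normc.normc0.
rewrite mul1r /cl; case: a.2; first by rewrite Normc.normc1.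
by rewrite normcN exprN1 Normc.normcV ht1 invr1.
Qed.

Lemma nc_d j (w : word n) : nc (d t j w) <= (size w)%:R.
Proof.
elim: w => [|a w IH]; first by rewrite d_nil Normc.normc0.
rewrite (d_cons ht0) /= -natr1 addrC.
apply: le_trans (le_normcD _ _) _; apply: lerD; last exact: nc_single.
by rewrite Normc.normcM nc_tpow mul1r.
Qed.

Lemma nc_wlen j (w : word n) : nc (d t j w) <= (wlen w)%:R.
Proof. by rewrite -(proj2 (reduce_spec ht0 w)); exact: nc_d. Qed.

End Norm.

Section Main.
Variables (R : realType) (n : nat) (f : 'I_n -> word n) (t : R[i]).
Local Notation nc := (@Normc.normc R).
Hypothesis hf1 : forall k, expsum (f k) = 1%R.
Hypothesis ht1 : nc t = 1.

Lemma main_ineq (v : 'rV[R[i]]_n) lam : v *m burau_eval f t = lam *: v -> forall p j,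
  nc lam ^+ p * nc (v 0 j) <=
  \sum_i nc (v 0 i) * (wlen (apply_pow f p (gen i)))%:R.
Proof.
move=> hv p j.
rewrite -nc_X -Normc.normcM -(eig_iter (ht0 ht1) hf1 hv).
have H := nc_sum (index_enum (ordinal n)) xpredT (fun i => v 0 i * d t j (apply_pow f p (gen i))).
apply: le_trans H _; apply: ler_sum => i _.
rewrite Normc.normcM; apply: ler_wpM2l; first exact: nc_ge0.
exact: nc_wlen.
Qed.

End Main.

Section Anal.
Variable R : realType.

Lemma ev (q e : R) : 0 <= q < 1 -> 0 < e -> exists M, forall p, (M <= p)%N -> q ^+ p < e.
Proof.
move=> /andP[q0 q1] e0.
have H := cvg_expr (z := q).
have : `|q| < 1 by rewrite ger0_norm.
move=> /H /cvgr0_norm_lt /(_ e e0) [M _ HM].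
exists M => p Mp; have := HM p Mp; rewrite /= ger0_norm // exprn_ge0 //.
Qed.

Variables (n : nat) (L : 'I_n -> nat -> nat) (s : 'I_n -> R) (c N : R).
Hypothesis s0 : forall i, 0 <= s i.
Hypothesis c0 : 0 < c.
Hypothesis hN : forall p, N ^+ p * c <= \sum_i s i * (L i p)%:R.

Lemma eventually_some (r : R) : 0 <= r < N ->
  exists M, forall p, (M <= p)%N -> exists i, r ^+ p <= (L i p)%:R.
Proof.
move=> /andP[r0 rN].
have N0 : 0 < N by apply: le_lt_trans rN.
set S := \sum_i s i.
have S0 : 0 <= S by apply: sumr_ge0 => i _.
have [M HM] : exists M, forall p, (M <= p)%N -> (r / N) ^+ p < c / (S + 1).
  apply: ev; last by rewrite divr_gt0 // ltr_wpDl.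
  apply/andP; split; [exact: divr_ge0 r0 (ltW N0) | by rewrite ltr_pdivrMr // mul1r].
exists M => p Mp.
apply/existsP; apply: contraT; rewrite negb_exists => /forallP H.
have H1 : \sum_i s i * (L i p)%:R <= S * r ^+ p.
  rewrite /S mulr_suml; apply: ler_sum => i _; apply: ler_wpM2l => //.
  by move: (H i); rewrite -ltNge => /ltW.
have H2 : S * r ^+ p < N ^+ p * c.
  have := HM p Mp; rewrite exprMn exprVn ltr_pdivrMr ?exprn_gt0 //.
  move=> h; have S1 : 0 < S + 1 by rewrite ltr_wpDl.
  move: h; rewrite -(ltr_pM2l S1) mulrA [(S + 1) * (c / _)]mulrCA divff ?gt_eqF // mulr1 [c * _]mulrC => h.
  apply: le_lt_trans h; rewrite mulrDl mul1r lerDl.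
  by rewrite exprn_ge0.
by have := lt_le_trans H2 (le_trans (hN p) H1); rewrite ltxx.
Qed.

Lemma pigeon (P : 'I_n -> nat -> Prop) M :
  (forall p, (M <= p)%N -> exists i, P i p) ->
  exists i, forall m, exists p, (m <= p)%N /\ P i p.
Proof.
move=> H; apply: Classical_Prop.NNPP => nH.
have H' : forall i, exists m, forall p, (m <= p)%N -> ~ P i p.
  move=> i; apply: Classical_Prop.NNPP => ni; apply: nH; exists i => m.
  apply: Classical_Prop.NNPP => nm; apply: ni; exists m => p mp Pp; apply: nm; exists p; by split.
have [g hg] := choice H'.
have [i Pi] := H (\max_i g i + M)%N (leq_addl _ _).
apply: (hg i _ _ Pi).
apply: leq_trans (leq_addr _ _); exact: leq_bigmax.
Qed.

Lemma limsup_ge (u : nat -> nat) (r : R) : 0 <= r ->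
  (forall m, exists p, (m <= p)%N /\ (0 < p)%N /\ r ^+ p <= (u p)%:R) ->
  (r%:E <= limn_esup (fun p : nat => (((u p)%:R : R) `^ (p%:R^-1))%:E))%E.
Proof.
move=> r0 H.
rewrite limn_esup_lim; rewrite (cvg_lim _ (@cvg_esups_inf R (fun p : nat => (((u p)%:R : R) `^ (p%:R^-1))%:E))) //.
apply: le_ereal_inf_tmp => _ [m _ <-].
have [p [mp [p0 hp]]] := H m.
apply: le_ereal_sup_tmp; exists ((((u p)%:R : R) `^ (p%:R^-1))%:E).
  by exists p.
rewrite lee_fin.
have -> : r = (r ^+ p) `^ (p%:R^-1).
  rewrite -powR_mulrn // -powRrM mulfV ?powRr1 //.
  by rewrite pnatr_eq0 -lt0n.
have pinv : 0 <= (p%:R : R)^-1 by rewrite invr_ge0.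
have x0 : r ^+ p \in Num.nneg by rewrite nnegrE exprn_ge0.
have y0 : ((u p)%:R : R) \in Num.nneg by rewrite nnegrE.
exact: (ge0_ler_powR pinv x0 y0 hp).
Qed.

End Anal.

Lemma final_ereal (R : realType) (N : R) (x : \bar R) :
  (0 <= x)%E -> (forall r, 0 <= r < N -> (r%:E <= x)%E) -> (N%:E <= x)%E.
Proof.
case: x => [g| |] // g0 hr; last by rewrite leey.
rewrite lee_fin in g0 *; rewrite leNgt; apply/negP => gN.
have [m1 m2] := midf_lt gN.
have := hr ((g + N) / 2); rewrite lee_fin m2 andbT.
have -> : 0 <= (g + N) / 2 by apply: le_trans (ltW m1).
by move=> /(_ isT); rewrite leNgt m1.
Qed.

Theorem theorem1 (R : realType) (n : nat) (f : 'I_n -> word n) :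
  (2 <= n)%N -> is_braid f ->
  (ereal_sup [set spectral_radius (burau_eval f t0)
             | t0 in [set t0 : R[i] | Normc.normc t0 = 1%R]]
   <= growth_rate (R := R) f)%E.
Proof.
move=> n2 [_ [[mu [A hA]] _]].
have hf1 : forall k, expsum (f k) = 1%R.
  move=> k; have [e1 _] := reduce_spec (oner_neq0 R[i]) (f k).
  rewrite -e1 hA.
  have [e2 _] := reduce_spec (oner_neq0 R[i]) (A k ++ gen (mu k) ++ winv (A k)).
  by rewrite e2 !expsum_cat expsum_winv /gen expsum_single /el /= addrCA subrr addr0.
set GR := growth_rate f.
have ui : forall i r, 0 <= r ->
    (forall m, exists p, (m <= p)%N /\ (0 < p)%N /\
       r ^+ p <= (wlen (apply_pow f p (gen i)))%:R) -> (r%:E <= GR)%E.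
  move=> i r r0 H; apply: le_trans (limsup_ge r0 H) _.
  by apply: ereal_sup_ubound; exists (gen i).
have n0 : (0 < n)%N by apply: leq_trans n2.
have GR0 : (0 <= GR)%E.
  apply: (ui (Ordinal n0) 0 (lexx 0)) => m.
  have pp : (0 < maxn m 1)%N by rewrite leq_max orbT.
  exists (maxn m 1); split; first exact: leq_maxl.
  split => //; rewrite expr0n; case: eqP => [p0|_]; first by move: pp; rewrite p0.
  exact: ler0n.
apply: ge_ereal_sup => _ [t0 /= ht1 <-].
apply: ge_ereal_sup => _ [lam /= /eigenvalueP [v hv vn0] <-].
have [j vj] : exists j, v 0 j != 0.
  case: (pickP (fun j => v 0 j != 0)) => [j vj|H]; first by exists j.
  exfalso; move/eqP: vn0; apply; apply/rowP => k; rewrite mxE; exact/eqP/negbFE/H.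
have key := main_ineq hf1 ht1 hv.
apply: final_ereal => // r hr.
set L := fun i p => wlen (apply_pow f p (gen i)).
have s0 : forall i, 0 <= Normc.normc (v 0 i) by move=> i; exact: nc_ge0.
have c0 : 0 < Normc.normc (v 0 j).
  rewrite lt_def nc_ge0 andbT; apply/eqP => /Normc.eq0_normc /eqP; exact/negP.
have [M HM] := @eventually_some R n L (fun i => Normc.normc (v 0 i)) _ _ s0 c0 (key ^~ j) r hr.
have [i Hi] := @pigeon n (fun i p => r ^+ p <= (L i p)%:R) M HM.
apply: (ui i r); first by case/andP: hr.
move=> m; have [p [mp hp]] := Hi (maxn m 1); exists p; split.
  exact: leq_trans (leq_maxl _ _) mp.
by split => //; apply: leq_trans mp; rewrite leq_max orbT.
Qed.
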